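(* Let $\Delta$ be a simplicial complex on a finite vertex set $[m]$. If $\Delta$ is shifted (respectively, compressed), then so is $\mathrm{Inc}(\Delta)$.
   Context: $\mathbb{N}=\{1,2,3,\dots\}$, $[m]=\{1,\dots,m\}$. A simplicial complex on $[m]$ is a collection of subsets of $[m]$ closed under taking subsets. For $d\ge1$, $F_d(\Delta)$ is the set of faces of $\Delta$ with exactly $d$ elements, viewed in $\binom{\mathbb{N}}{d}$ (the $d$-subsets of $\mathbb{N}$, written $\mathbf{u}=(u_1,\dots,u_d)$ with $u_1<\cdots<u_d$). Squashed order: $\mathbf{u}<\mathbf{v}$ iff the largest element of the symmetric difference of $\mathbf u,\mathbf v$ lies in $\mathbf{v}$; a finite family in $\binom{\mathbb{N}}{d}$ is compressed if it consists of the smallest elements of $\binom{\mathbb{N}}{d}$ in this order. Borel order: $\mathbf{v}\le_B\mathbf{u}$ iff $v_i\le u_i$ for all $i$; a family is shifted if it contains every $\mathbf{v}\le_B\mathbf{u}$ for each of its members $\mathbf{u}$. $\Delta$ is shifted (resp. compressed) if $F_d(\Delta)$ is shifted (resp. compressed) for every $d\ge1$. $\mathrm{Inc}_1$ is the set of maps $\pi\colon\mathbb{N}\to\mathbb{N}$ with $\pi(j)<\pi(j+1)$ and $\pi(j)\le j+1$ for all $j$, acting by $\pi(\mathbf{u})=(\pi(u_1),\ldots,\pi(u_d))$; for $\mathcal{F}\subseteq\binom{\mathbb{N}}{d}$, $\mathrm{Inc}(\mathcal{F})=\{\pi(\mathbf{u})\mid\mathbf{u}\in\mathcal{F},\pi\in\mathrm{Inc}_1\}$,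 and $\mathrm{Inc}(\Delta)=\bigcup_{d\ge1}\mathrm{Inc}(F_d(\Delta))$ (together with the empty face), which is again a simplicial complex. *)

(* Defs.v *)
(* Finite subsets of N = {1,2,...} are represented by their
   strictly increasing enumeration (a seq nat), i.e. u = (u_1 < ... < u_d). *)
From mathcomp Require Import all_boot.
Set Implicit Arguments. Unset Strict Implicit. Unset Printing Implicit Defensive.

Definition dsub (d : nat) (u : seq nat) : Prop :=
  [/\ size u = d, sorted ltn u & all (fun x => 0 < x) u].

Definition sfamily := seq nat -> Prop.

Definition simplicial_complex_on (m : nat) (D : sfamily) : Prop :=
  (forall u, D u -> sorted ltn u /\ all (fun x => (0 < x) && (x <= m)) u) /\
  (forall u v, D u -> subseq v u -> D v).

Definition Fd (D : sfamily) (d : nat) : sfamily := fun u => D u /\ size u = d.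

Definition squashed_lt (u v : seq nat) : Prop :=
  exists x, [/\ x \in v, x \notin u & forall y, x < y -> (y \in u) = (y \in v)].

Definition borel_le (v u : seq nat) : Prop :=
  size v = size u /\ forall i, i < size u -> nth 0 v i <= nth 0 u i.

Definition finite_family (F : sfamily) : Prop :=
  exists N, forall u, F u -> all (fun x => x <= N) u.

Definition compressed_fam (d : nat) (F : sfamily) : Prop :=
  finite_family F /\
  forall u v, F u -> dsub d v -> squashed_lt v u -> F v.

Definition shifted_fam (d : nat) (F : sfamily) : Prop :=
  forall u v, F u -> dsub d v -> borel_le v u -> F v.

Definition shifted_cx (D : sfamily) : Prop :=
  forall d, 1 <= d -> shifted_fam d (Fd D d).

Definition compressed_cx (D : sfamily) : Prop :=
  forall d, 1 <= d -> compressed_fam d (Fd D d).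

(* Inc_1 : maps N -> N (values at 0 irrelevant), pi(j) < pi(j+1), pi(j) <= j+1 *)
Definition Inc1 (pi : nat -> nat) : Prop :=
  0 < pi 1 /\ forall j, 1 <= j -> pi j < pi j.+1 /\ pi j <= j.+1.

Definition Inc_fam (F : sfamily) : sfamily :=
  fun w => exists u pi, [/\ F u, Inc1 pi & w = map pi u].

Definition Inc_cx (D : sfamily) : sfamily :=
  fun w => w = [::] \/ exists d, 1 <= d /\ Inc_fam (Fd D d) w.

(* Main.v *)
Require Import Defs.
From mathcomp Require Import all_boot zify.
Set Implicit Arguments. Unset Strict Implicit.

Lemma mono (s : seq nat) i j : sorted ltn s -> i <= j -> j < size s ->
  nth 0 s i + (j - i) <= nth 0 s j.
Proof.
move=> /(sortedP 0) Hs Hij; elim: j Hij => [|j IH] Hij Hj.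
  have -> : i = 0 by lia.
  by rewrite addn0.
case: (ltnP i j.+1) => Hi.
  have H1 := IH Hi (ltnW Hj). have H2 := Hs j Hj. lia.
have -> : i = j.+1 by lia. lia.
Qed.

Lemma lb (s : seq nat) i : sorted ltn s -> all (fun x => 0 < x) s -> i < size s ->
  i < nth 0 s i.
Proof.
move=> Hs Hp Hi; have := mono Hs (leq0n i) Hi.
have : 0 < nth 0 s 0 by apply: (all_nthP 0 Hp); lia.
lia.
Qed.

Fixpoint plen (k : nat) (s : seq nat) : nat :=
  if s is y :: s' then (if y == k.+1 then (plen k.+1 s').+1 else 0) else 0.

Lemma plen_le k s : plen k s <= size s.
Proof. elim: s k => [|y s IH] k //=; case: eqP => // _; exact: IH. Qed.

Lemma plen_nth k s i : i < plen k s -> nth 0 s i = k + i.+1.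
Proof.
elim: s k i => [|y s IH] k i //=; case: eqP => // ->.
case: i => [|i] //= Hi; first lia.
rewrite (IH k.+1 i Hi); lia.
Qed.

Lemma plen_nth_neq k s : plen k s < size s -> nth 0 s (plen k s) != k + (plen k s).+1.
Proof.
elim: s k => [|y s IH] k //=; case: eqP => [->|Hne] /= Hlt.
  have := IH k.+1 Hlt. apply: contra => /eqP ->; apply/eqP; lia.
apply/eqP => E; apply: Hne; rewrite E; lia.
Qed.

Definition tau c x := if x <= c then x else x.-1.
Definition sig c j := if j <= c then j else j.+1.

Lemma sig_Inc1 c : Inc1 (sig c).
Proof.
split; first by rewrite /sig; case: ifP.
move=> j Hj; rewrite /sig; case: ifP; case: ifP; lia.
Qed.

Lemma decomp d v : dsub d v -> exists c v', [/\ dsub d v', map (sig c) v' = v &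
  forall i, i < d -> (i < c /\ nth 0 v i = i.+1 /\ nth 0 v' i = i.+1) \/
                     (c <= i /\ i.+2 <= nth 0 v i /\ nth 0 v' i = (nth 0 v i).-1)].
Proof.
case=> Hsz Hs Hp.
set c := plen 0 v.
have Hc : c <= d by rewrite -Hsz plen_le.
have F : forall i, i < d -> (i < c /\ nth 0 v i = i.+1) \/ (c <= i /\ i.+2 <= nth 0 v i).
  move=> i Hi; case: (ltnP i c) => Hic.
    by left; split => //; rewrite (plen_nth Hic).
  right; split => //.
  have Hcs : c < size v by lia.
  have H1 := plen_nth_neq Hcs. have H2 := lb Hs Hp Hcs.
  have H3 := mono Hs Hic (leq_trans Hi (eq_leq (esym Hsz))).
  rewrite -/c in H1; move/eqP: H1 => H1. lia.
exists c, (map (tau c) v).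
have F' : forall i, i < d -> (i < c /\ nth 0 v i = i.+1 /\ nth 0 (map (tau c) v) i = i.+1) \/
                     (c <= i /\ i.+2 <= nth 0 v i /\ nth 0 (map (tau c) v) i = (nth 0 v i).-1).
  move=> i Hi; rewrite (nth_map 0); last by lia.
  rewrite /tau; case: (F i Hi) => [[H1 H2]|[H1 H2]]; case: ifP => H3.
  - by left; rewrite H2.
  - lia.
  - lia.
  - by right.
split => //.
- split; first by rewrite size_map.
  + apply/(sortedP 0) => i; rewrite size_map => Hi.
    have := (sortedP 0 Hs) i Hi.
    case: (F' i (ltn_trans (ltnSn i) (leq_trans Hi (eq_leq Hsz))));
    case: (F' i.+1 (leq_trans Hi (eq_leq Hsz))); lia.
  + apply/(all_nthP 0) => i; rewrite size_map => Hi.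
    case: (F' i (leq_trans Hi (eq_leq Hsz))); lia.
- apply: (eq_from_nth (x0 := 0)); first by rewrite !size_map.
  move=> i; rewrite !size_map => Hi.
  rewrite (nth_map 0); last by rewrite size_map.
  rewrite /sig; case: (F' i (leq_trans Hi (eq_leq Hsz))); case: ifP; lia.
Qed.

Lemma pi_bounds pi : Inc1 pi -> forall t, 1 <= t -> t <= pi t <= t.+1.
Proof.
case=> H1 H; elim=> [|t IH] // Ht.
case: t IH Ht => [|t] IH Ht; first by have := H 1 (leqnn 1); lia.
have := IH (ltn0Sn t); have := H t.+1 (ltn0Sn t); have := H t.+2 (ltn0Sn t.+1); lia.
Qed.

Lemma pi_mono pi : Inc1 pi -> forall a b, 1 <= a -> a < b -> pi a < pi b.
Proof.
move=> Hpi a b Ha; elim: b => [|b IH] // Hb.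
have [H1 _] := Hpi.2 b (leq_trans Ha (ltnSE Hb)).
case: (ltnP a b) => Hab; first by have := IH Hab; lia.
by have -> : a = b by lia.
Qed.

Lemma TL (a b : seq nat) j : sorted ltn a -> sorted ltn b -> size a = size b ->
  j < size b -> nth 0 a j < nth 0 b j ->
  (forall l, j < l < size b -> nth 0 a l = nth 0 b l) -> squashed_lt a b.
Proof.
move=> Ha Hb Hsz Hj Hlt Heq; exists (nth 0 b j); split.
- exact: mem_nth.
- apply/negP => /(nthP 0) [k Hk Ek].
  change (nth 0 a k = nth 0 b j) in Ek.
  change (is_true (k < size a)) in Hk.
  case: (leqP k j) => Hkj.
    have := mono Ha Hkj (leq_trans Hj (eq_leq (esym Hsz))); lia.
  have := Heq k (andb_true_intro (conj Hkj (leq_trans Hk (eq_leq Hsz)))).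
  have := mono Hb (ltnW Hkj) (leq_trans Hk (eq_leq Hsz)); lia.
- move=> y Hy; apply/idP/idP.
  + move=> /(nthP 0) [k Hk Ek].
    change (nth 0 a k = y) in Ek.
    change (is_true (k < size a)) in Hk.
    case: (leqP k j) => Hkj.
      have := mono Ha Hkj (leq_trans Hj (eq_leq (esym Hsz))); lia.
    rewrite -Ek (Heq k (andb_true_intro (conj Hkj (leq_trans Hk (eq_leq Hsz))))).
    by apply: mem_nth; rewrite -Hsz.
  + move=> /(nthP 0) [k Hk Ek].
    change (nth 0 b k = y) in Ek.
    change (is_true (k < size b)) in Hk.
    case: (leqP k j) => Hkj.
      have := mono Hb Hkj Hj; lia.
    rewrite -Ek -(Heq k (andb_true_intro (conj Hkj Hk))).
    by apply: mem_nth; rewrite Hsz.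
Qed.

Lemma topdiff (a b : seq nat) n k : k <= n ->
  (forall i, n - k <= i < n -> nth 0 a i <= nth 0 b i) ->
  (forall i, n - k <= i < n -> nth 0 a i = nth 0 b i) \/
  exists2 i, n - k <= i < n & nth 0 a i < nth 0 b i /\ forall l, i < l < n -> nth 0 a l = nth 0 b l.
Proof.
elim: k => [|k IH] Hk H.
  by left => i; lia.
have Hk' : k <= n by lia.
case: (IH Hk') => [i Hi|E|[i Hi1 Hi2]].
- apply: H; lia.
- have Hm := H (n - k.+1) ltac:(lia).
  case: (ltnP (nth 0 a (n - k.+1)) (nth 0 b (n - k.+1))) => Hlt.
    right; exists (n - k.+1); first lia.
    split => // l Hl; apply: E; lia.
  left => i Hi; case: (ltnP i (n - k)) => Hi2.
    have -> : i = n - k.+1 by lia. lia.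
  apply: E; lia.
- right; exists i => //; lia.
Qed.

Lemma borsq (a b : seq nat) t : sorted ltn a -> sorted ltn b -> size a = size b ->
  t <= size b -> (forall i, t <= i < size b -> nth 0 a i <= nth 0 b i) ->
  (t = 0 \/ (0 < t /\ nth 0 a t.-1 < nth 0 b t.-1)) -> a = b \/ squashed_lt a b.
Proof.
move=> Ha Hb Hsz Ht Hle Hc.
have := @topdiff a b (size b) (size b - t) ltac:(lia).
have -> : size b - (size b - t) = t by lia.
case/(_ Hle) => [E|[i Hi [Hl He]]].
- case: Hc => [Ht0|[Ht0 Hlt]].
    left; apply: (eq_from_nth (x0 := 0)) => // i Hi; apply: E; lia.
  right; apply: (TL Ha Hb Hsz (j := t.-1)) => //; first lia.
  move=> l Hl; apply: E; lia.
- right; apply: (TL Ha Hb Hsz (j := i)) => //; lia.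
Qed.

Lemma split_sorted (s : seq nat) x : sorted ltn s ->
  s = [seq y <- s | y <= x] ++ [seq y <- s | x < y].
Proof.
elim: s => [|y s IH] //= Hp.
have Hs := path_sorted Hp.
case: (leqP y x) => Hyx /=.
  by rewrite {1}(IH Hs).
have Hall := order_path_min ltn_trans Hp.
rewrite (@eq_in_filter _ (fun y => y <= x) pred0 s); last first.
  move=> z Hz /=; have := allP Hall z Hz; rewrite /=; lia.
rewrite (@eq_in_filter _ (fun y => x < y) predT s); last first.
  move=> z Hz /=; have := allP Hall z Hz; rewrite /=; lia.
by rewrite filter_pred0 filter_predT.
Qed.

Lemma sq_idx' (a b : seq nat) (x : nat) : sorted ltn a -> sorted ltn b -> size a = size b ->
  x \in b -> x \notin a -> (forall y, x < y -> (y \in a) = (y \in b)) ->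
  exists j, [/\ j < size b, nth 0 a j < nth 0 b j &
    forall l, j < l < size b -> nth 0 a l = nth 0 b l].
Proof.
move=> Ha Hb Hsz xb xa Hy.
set La := [seq y <- a | y <= x]; set Lb := [seq y <- b | y <= x].
set Ta := [seq y <- a | x < y]; set Tb := [seq y <- b | x < y].
have ea : a = La ++ Ta by exact: split_sorted.
have eb : b = Lb ++ Tb by exact: split_sorted.
have ET : Ta = Tb.
  apply: (irr_sorted_eq ltn_trans ltnn); try exact: (sorted_filter ltn_trans).
  move=> z; rewrite !mem_filter; case: (ltnP x z) => //= H; by rewrite Hy.
have Hsa : size a = size La + size Ta by rewrite {1}ea size_cat.
have Hsb : size b = size Lb + size Tb by rewrite {1}eb size_cat.
have HT : size Ta = size Tb by rewrite ET.
have HLa : size La = size Lb by lia.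
have xLb : x \in Lb by rewrite mem_filter leqnn.
have HLb0 : 0 < size Lb by case: (Lb) xLb.
have SLb : sorted ltn Lb by exact: (sorted_filter ltn_trans).
exists (size Lb).-1; split.
- lia.
- have E1 : nth 0 a (size Lb).-1 = nth 0 La (size Lb).-1.
    by rewrite {1}ea nth_cat ifT //; lia.
  have E2 : nth 0 b (size Lb).-1 = nth 0 Lb (size Lb).-1.
    by rewrite {1}eb nth_cat ifT //; lia.
  rewrite E1 E2.
  have InLa : nth 0 La (size Lb).-1 \in La.
    apply: mem_nth. rewrite HLa; lia.
  move: InLa; rewrite mem_filter => /andP [H1 H2].
  have H3 : nth 0 La (size Lb).-1 != x by apply: contraNneq xa => <-.
  move: xLb => /(nthP 0) [k Hk Ek].
  change (nth 0 Lb k = x) in Ek.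
  change (is_true (k < size Lb)) in Hk.
  have := mono SLb (i := k) (j := (size Lb).-1) ltac:(lia) ltac:(lia).
  move/eqP: H3; lia.
- move=> l Hl.
  rewrite ea eb !nth_cat ifF; last lia.
  rewrite ifF; last lia.
  rewrite ET; congr nth; lia.
Qed.

Lemma sq_idx (a b : seq nat) : sorted ltn a -> sorted ltn b -> size a = size b ->
  squashed_lt a b -> exists j, [/\ j < size b, nth 0 a j < nth 0 b j &
    forall l, j < l < size b -> nth 0 a l = nth 0 b l].
Proof. move=> Ha Hb Hsz [x [xb xa Hy]]; exact: (sq_idx' Ha Hb Hsz xb xa Hy). Qed.

Lemma unpack D d w : 1 <= d -> Fd (Inc_cx D) d w ->
  exists u pi, [/\ D u, size u = d, Inc1 pi & w = map pi u].
Proof.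
move=> Hd [[->|[d0 [Hd0 [u [pi [[Du Hsu] Hpi ->]]]]]] Hsw].
  by move: Hsw => /= Hsw; lia.
exists u, pi; split => //; by rewrite size_map in Hsw.
Qed.

Theorem corollary4p1 (m : nat) (D : sfamily) :
  simplicial_complex_on m D ->
  (shifted_cx D -> shifted_cx (Inc_cx D)) /\
  (compressed_cx D -> compressed_cx (Inc_cx D)).
Proof.
move=> [Hsc _]; split.
- move=> Hsh d Hd w v Hw Hdv [Hsz Hb].
  have [u [pi [Du Hsu Hpi Ew]]] := unpack Hd Hw.
  have [Hus /allP Hup] := Hsc u Du.
  have Hup' : all (fun x => 0 < x) u.
    by apply/allP => x /Hup /andP [].
  have [c [v' [Hdv' Hmap Hf]]] := decomp Hdv.
  have Hdv2 := Hdv; case: Hdv2 => Hszv _ _.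
  have Fv' : Fd D d v'.
    apply (Hsh d Hd u v' (conj Du Hsu) Hdv').
    case: Hdv' => Hszv' _ _; split; first by rewrite Hszv' Hsu.
    move=> i; rewrite Hsu => Hi.
    have := Hb i; rewrite Ew size_map Hsu => /(_ Hi).
    rewrite (nth_map 0); last by rewrite Hsu.
    have Hl := lb Hus Hup' (leq_trans Hi (eq_leq (esym Hsu))).
    have := pi_bounds Hpi (t := nth 0 u i) ltac:(lia).
    case: (Hf i Hi); lia.
  split; last by [].
  right; exists d; split => //; exists v', (sig c); split; [exact: Fv' | exact: sig_Inc1 | by rewrite Hmap].
- move=> Hco d Hd; have [Hfin Hcomp] := Hco d Hd; split.
  + exists m.+1 => w Hw.
    have [u [pi [Du Hsu Hpi ->]]] := unpack Hd Hw.
    have [_ /allP Hup] := Hsc u Du.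
    apply/allP => y /mapP [x xu ->].
    have /andP [H1 H2] := Hup x xu.
    have := pi_bounds Hpi H1; lia.
  + move=> w v Hw Hdv Hlt.
    have [u [pi [Du Hsu Hpi Ew]]] := unpack Hd Hw.
    have [Hus /allP Hup] := Hsc u Du.
    have Hup' : all (fun x => 0 < x) u.
      by apply/allP => x /Hup /andP [].
    have [c [v' [Hdv' Hmap Hf]]] := decomp Hdv.
    have Hdv2 := Hdv; case: Hdv2 => Hszv Hsv Hpv.
    have Hdv3 := Hdv'; case: Hdv3 => Hszv' Hsv' Hpv'.
    have Hsw : size w = d by rewrite Ew size_map.
    have Hws : sorted ltn w.
      rewrite Ew; apply/(sortedP 0) => i; rewrite size_map => Hi.
      rewrite !(nth_map 0) //; last by lia.
      apply: (pi_mono Hpi).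
        by apply: (all_nthP 0 Hup'); lia.
      exact: (sortedP 0 Hus).
    have [j [Hj Hvj Habove]] := sq_idx Hsv Hws (etrans Hszv (esym Hsw)) Hlt.
    rewrite Hsw in Hj Habove.
    have Wf : forall i, i < d -> nth 0 w i = pi (nth 0 u i) /\ i < nth 0 u i /\
                nth 0 u i <= pi (nth 0 u i) <= (nth 0 u i).+1.
      move=> i Hi; rewrite Ew (nth_map 0); last by lia.
      have Hl := lb Hus Hup' (leq_trans Hi (eq_leq (esym Hsu))).
      split => //; split => //; exact: (pi_bounds Hpi (t := nth 0 u i) ltac:(lia)).
    have Hvu : v' = u \/ squashed_lt v' u.
      have Hj' := Wf j Hj.
      case: (ltnP (nth 0 v' j) (nth 0 u j)) => Hjlt.
      * apply: (borsq Hsv' Hus (etrans Hszv' (esym Hsu)) (t := j.+1)).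
        -- lia.
        -- move=> i; rewrite Hsu => /andP [Hi1 Hi2].
           have := Habove i (andb_true_intro (conj Hi1 Hi2)).
           have := Wf i Hi2; case: (Hf i Hi2); lia.
        -- by right; split => //=.
      * apply: (borsq Hsv' Hus (etrans Hszv' (esym Hsu)) (t := 0)) => //.
        -- move=> i; rewrite Hsu => /andP [_ Hi].
           have := Wf i Hi; have := Hf i Hi; have := Hf j Hj.
           case: (ltnP j i) => Hji.
             have := Habove i (andb_true_intro (conj Hji Hi)); lia.
           move: Hji Hjlt Hvj Hj'; lia.
        -- by left.
    have Fv' : Fd D d v'.
      case: Hvu => [->|Hsq]; first by split.
      exact: (Hcomp u v' (conj Du Hsu) Hdv' Hsq).
    split; last by [].
    right; exists d; split => //; exists v', (sig c); split; [exact: Fv' | exact: sig_Inc1 | by rewrite Hmap].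
Qed.
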